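(* There exists a countable poset $P$ such that the space $\mathrm{UF}(P)$ is Hausdorff but not regular.
   Context: A filter on a poset $(P,\le_P)$ is an upward closed subset in which any two elements have a common lower bound in the set; it is unbounded if there is no $r\in P$ with $r<_P p$ for all $p$ in it ($r<_Pp$ meaning $r\le_Pp$ and not $p\le_Pr$). $\mathrm{UF}(P)$ is the set of unbounded filters on $P$ with topology generated by the sets $N_p=\{F:p\in F\}$, $p\in P$. *)

(* Defs.v *)
From Stdlib Require Import List.

Definition is_poset {P : Type} (le : P -> P -> Prop) : Prop :=
  (forall p, le p p) /\
  (forall p q, le p q -> le q p -> p = q) /\
  (forall p q r, le p q -> le q r -> le p r).

Definition countable_type (P : Type) : Prop :=
  exists f : P -> nat, forall x y, f x = f y -> x = y.

Definition ltP {P : Type} (le : P -> P -> Prop) (r p : P) : Prop :=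
  le r p /\ ~ le p r.

Definition is_filter {P : Type} (le : P -> P -> Prop) (F : P -> Prop) : Prop :=
  (forall p q, F p -> le p q -> F q) /\
  (forall p q, F p -> F q -> exists r, F r /\ le r p /\ le r q).

Definition unbounded {P : Type} (le : P -> P -> Prop) (F : P -> Prop) : Prop :=
  ~ (exists r, forall p, F p -> ltP le r p).

Definition UF {P : Type} (le : P -> P -> Prop) (F : P -> Prop) : Prop :=
  is_filter le F /\ unbounded le F.

(* Generic topology on the subset S of a type X generated by the subbase
   { B i | i : I } (each B i read as B i ∩ S): U is open iff every point of
   U ∩ S lies in a finite intersection of subbasic sets contained in U. *)
Definition subbase_open {X I : Type} (S : X -> Prop) (B : I -> X -> Prop)
    (U : X -> Prop) : Prop :=
  forall x, S x -> U x ->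
    exists s : list I,
      (forall i, In i s -> B i x) /\
      (forall y, S y -> (forall i, In i s -> B i y) -> U y).

(* Hausdorff, for a space with carrier S and open-set predicate opn.
   Points are compared extensionally (points here are subsets of P). *)
Definition hausdorff_on {X : Type} (S : X -> Prop) (eqv : X -> X -> Prop)
    (opn : (X -> Prop) -> Prop) : Prop :=
  forall x y, S x -> S y -> ~ eqv x y ->
    exists U V, opn U /\ opn V /\ U x /\ V y /\
      (forall z, S z -> U z -> V z -> False).

Definition closed_on {X : Type} (opn : (X -> Prop) -> Prop) (C : X -> Prop) : Prop :=
  opn (fun x => ~ C x).

Definition regular_on {X : Type} (S : X -> Prop)
    (opn : (X -> Prop) -> Prop) : Prop :=
  forall x C, S x -> closed_on opn C -> ~ C x ->
    exists U V, opn U /\ opn V /\ U x /\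
      (forall z, S z -> C z -> V z) /\
      (forall z, S z -> U z -> V z -> False).

Definition N_sub {P : Type} (p : P) : (P -> Prop) -> Prop := fun F => F p.

Definition UF_open {P : Type} (le : P -> P -> Prop) (U : (P -> Prop) -> Prop) : Prop :=
  subbase_open (UF le) (@N_sub P) U.

Definition set_eqv {P : Type} (F G : P -> Prop) : Prop := forall p, F p <-> G p.

(* Main.v *)
Require Import Defs.
From Stdlib Require Import List Lia Arith Classical Cantor.

Inductive PP := PM (n k : nat) | PD (n j : nat) | PE (i : nat).

Definition lePP (x y : PP) : Prop :=
  match x, y with
  | PM n k, PM n' k' => n = n' /\ k = k'
  | PM n k, PD n' j => n = n' /\ j <= k
  | PM n k, PE i => i <= n
  | PD n j, PD n' j' => n = n' /\ j' <= j
  | PE i, PE i' => i' <= i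
  | _, _ => False
  end.

Definition upM n k : PP -> Prop := fun x => lePP (PM n k) x.
Definition Dset n : PP -> Prop := fun x => exists j, x = PD n j.
Definition Eset : PP -> Prop := fun x => exists i, x = PE i.

Lemma poset_PP : is_poset lePP.
Proof.
  split; [|split].
  - intros [n k|n j|i]; simpl; auto.
  - intros [n k|n j|i] [n' k'|n' j'|i']; simpl; intros H1 H2; try contradiction;
      f_equal; lia.
  - intros [n k|n j|i] [n' k'|n' j'|i'] [a b|a b|c]; simpl; intros H1 H2;
      try contradiction; lia.
Qed.

Definition code (x : PP) : nat :=
  match x with
  | PM n k => to_nat (0, to_nat (n, k))
  | PD n j => to_nat (1, to_nat (n, j))
  | PE i => to_nat (2, i)
  end.

Lemma count_PP : countable_type PP.
Proof.
  exists code. intros x y H.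
  assert (H' : of_nat (code x) = of_nat (code y)) by (rewrite H; reflexivity).
  destruct x, y; unfold code in H'; rewrite !cancel_of_to in H'; inversion H' as [E2];
    try discriminate; auto.
  all: change (to_nat (n,k) = to_nat (n0,k0)) in E2 || change (to_nat (n,j) = to_nat (n0,j0)) in E2; apply (f_equal of_nat) in E2; rewrite !cancel_of_to in E2; inversion E2; auto.
Qed.

Lemma classify F : UF lePP F ->
  (exists n k, forall x, F x <-> upM n k x) \/
  (exists n, forall x, F x <-> Dset n x) \/
  (forall x, F x <-> Eset x).
Proof.
  intros [[Hup Hdir] Hunb].
  destruct (classic (exists n k, F (PM n k))) as [[n [k Hm]]|HnoM].
  - left. exists n, k. intro x; split.
    + intro Fx. destruct (Hdir _ _ Hm Fx) as [r [Fr [r1 r2]]].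
      destruct r; simpl in r1; try contradiction. destruct r1; subst. exact r2.
    + intro H; exact (Hup _ _ Hm H).
  - assert (Hne: exists x0, F x0).
    { apply NNPP; intro Hc. apply Hunb. exists (PE 0). intros p Fp.
      exfalso; apply Hc; eauto. }
    destruct Hne as [x0 Fx0]. destruct x0 as [n k|n j|i].
    + exfalso; eauto.
    + right; left. exists n.
      assert (Hsub: forall x, F x -> Dset n x).
      { intros x Fx. destruct (Hdir _ _ Fx0 Fx) as [r [Fr [r1 r2]]].
        destruct r as [a b|a b|a]; simpl in r1.
        * exfalso; eauto.
        * destruct r1 as [-> _]. destruct x as [c d|c d|c]; simpl in r2; try contradiction.
          destruct r2 as [<- _]. exists d; reflexivity.
        * contradiction. }
      assert (Hall: forall J, F (PD n J)).
      { intro J. apply NNPP; intro HJ. apply Hunb. exists (PM n J). intros p Fp.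
        destruct (Hsub p Fp) as [jj ->]. split.
        - simpl. split; [reflexivity|]. destruct (le_lt_dec jj J); [lia|].
          exfalso; apply HJ; apply (Hup _ _ Fp); simpl; split; [reflexivity|lia].
        - simpl. tauto. }
      intro x; split; [apply Hsub|intros [jj ->]; apply Hall].
    + right; right.
      assert (Hsub: forall x, F x -> Eset x).
      { intros x Fx. destruct (Hdir _ _ Fx0 Fx) as [r [Fr [r1 r2]]].
        destruct r as [a b|a b|a]; simpl in r1.
        * exfalso; eauto.
        * contradiction.
        * destruct x as [c d|c d|c]; simpl in r2; try contradiction.
          exists c; reflexivity. }
      assert (Hall: forall I, F (PE I)).
      { intro I. apply NNPP; intro HI. apply Hunb. exists (PM I 0). intros p Fp.
        destruct (Hsub p Fp) as [j ->]. split.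
        - simpl. destruct (le_lt_dec j I); [lia|].
          exfalso; apply HI; apply (Hup _ _ Fp); simpl; lia.
        - simpl. tauto. }
      intro x; split; [apply Hsub|intros [j ->]; apply Hall].
Qed.

Lemma open_N (p : PP) : UF_open lePP (fun H => H p).
Proof.
  intros x _ Hx. exists (p :: nil). split.
  - intros i [<-|[]]; exact Hx.
  - intros y _ Hy. apply Hy; left; reflexivity.
Qed.

Lemma sep (x y : PP -> Prop) p q :
  x p -> y q -> (forall r, lePP r p -> lePP r q -> False) ->
  exists U V, UF_open lePP U /\ UF_open lePP V /\ U x /\ V y /\
      (forall z, UF lePP z -> U z -> V z -> False).
Proof.
  intros Hx Hy Hr. exists (fun H => H p), (fun H => H q).
  split; [apply open_N|]. split; [apply open_N|]. split; [exact Hx|]. split; [exact Hy|].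
  intros z [[_ Hdir] _] Hp Hq. destruct (Hdir _ _ Hp Hq) as [r [_ [r1 r2]]]. eauto.
Qed.

Lemma UF_upM n k : UF lePP (upM n k).
Proof.
  split; [split|].
  - intros p q H1 H2. unfold upM in *.
    destruct poset_PP as [_ [_ T]]. eauto.
  - intros p q H1 H2. exists (PM n k). refine (conj _ (conj H1 H2)). unfold upM; simpl; auto.
  - intros [r Hr]. assert (Hm : upM n k (PM n k)) by (unfold upM; simpl; auto). destruct (Hr (PM n k) Hm) as [H1 H2].
    apply H2. destruct r; simpl in H1; try contradiction. destruct H1; subst; simpl; auto.
Qed.

Lemma UF_Dset n : UF lePP (Dset n).
Proof.
  split; [split|].
  - intros p q [j ->] H. destruct q; simpl in H; try contradiction.
    destruct H as [<- _]. eexists; reflexivity.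
  - intros p q [j ->] [j' ->]. exists (PD n (max j j')). split; [eexists; reflexivity|].
    simpl; split; split; auto; lia.
  - intros [r Hr]. destruct r as [a b|a b|a].
    + destruct (Hr (PD n (S b))) as [H _]; [eexists; reflexivity|]. simpl in H; lia.
    + destruct (Hr (PD n (S b))) as [H _]; [eexists; reflexivity|]. simpl in H; lia.
    + destruct (Hr (PD n 0)) as [H _]; [eexists; reflexivity|]. simpl in H; auto.
Qed.

Lemma UF_Eset : UF lePP Eset.
Proof.
  split; [split|].
  - intros p q [j ->] H. destruct q; simpl in H; try contradiction. eexists; reflexivity.
  - intros p q [j ->] [j' ->]. exists (PE (max j j')). split; [eexists; reflexivity|].
    simpl; split; lia.
  - intros [r Hr]. destruct r as [a b|a b|a].
    + destruct (Hr (PE (S a))) as [H _]; [eexists; reflexivity|]. simpl in H; lia.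
    + destruct (Hr (PE 0)) as [H _]; [eexists; reflexivity|]. simpl in H; auto.
    + destruct (Hr (PE (S a))) as [H _]; [eexists; reflexivity|]. simpl in H; lia.
Qed.

Definition bnd (x : PP) : nat :=
  match x with PM _ _ => 0 | PD _ j => j | PE i => i end.

Lemma list_bnd (s : list PP) : exists N, forall x, In x s -> bnd x <= N.
Proof.
  induction s as [|a s [N HN]].
  - exists 0; intros x [].
  - exists (max (bnd a) N). intros x [<-|Hx]; [lia|]. specialize (HN x Hx); lia.
Qed.

Ltac fin := first [ match goal with H : forall _, _ <-> _ |- _ => solve [apply H; unfold upM, Dset, Eset; simpl; eauto] end
  | solve [intros [a b|a b|a] r1 r2; simpl in r1, r2; try contradiction; lia] ].

Theorem corollary2p19 :
  exists (P : Type) (le : P -> P -> Prop),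
    is_poset le /\ countable_type P /\
    hausdorff_on (UF le) (@set_eqv P) (UF_open le) /\
    ~ regular_on (UF le) (UF_open le).
Proof.
  exists PP, lePP. split; [exact poset_PP|]. split; [exact count_PP|]. split.
  - intros x y Sx Sy Hne.
    destruct (classify x Sx) as [[n [k Hx]]|[[n Hx]|Hx]];
    destruct (classify y Sy) as [[n' [k' Hy]]|[[n' Hy]|Hy]].
    + destruct (Nat.eq_dec n n'); destruct (Nat.eq_dec k k').
      1: { subst; exfalso; apply Hne; intro p; rewrite Hx, Hy; tauto. }
      all: apply (sep x y (PM n k) (PM n' k')).
      all: fin.
    + apply (sep x y (PM n k) (PD n' (S k))).
      all: fin.
    + apply (sep x y (PM n k) (PE (S n))).
      all: fin.
    + apply (sep x y (PD n (S k')) (PM n' k')).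
      all: fin.
    + destruct (Nat.eq_dec n n').
      1: { subst; exfalso; apply Hne; intro p; rewrite Hx, Hy; tauto. }
      apply (sep x y (PD n 0) (PD n' 0)).
      all: fin.
    + apply (sep x y (PD n 0) (PE (S n))).
      all: fin.
    + apply (sep x y (PE (S n')) (PM n' k')).
      all: fin.
    + apply (sep x y (PE (S n')) (PD n' 0)).
      all: fin.
    + exfalso; apply Hne; intro p; rewrite Hx, Hy; tauto.
  - intro Hreg.
    set (C := fun H : PP -> Prop => exists n, forall x, H x <-> Dset n x).
    assert (Ccl : closed_on (UF_open lePP) C).
    { intros H SH HC.
      destruct (classify H SH) as [[n [k Hx]]|[[n Hx]|Hx]].
      - exists (PM n k :: nil). split.
        + intros i [<-|[]]. apply Hx; unfold upM; simpl; repeat split.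
        + intros y _ Hy [m Hm]. destruct (proj1 (Hm (PM n k)) (Hy _ (or_introl eq_refl)))
            as [j Hj]; discriminate.
      - exfalso; apply HC; exists n; exact Hx.
      - exists (PE 0 :: nil). split.
        + intros i [<-|[]]. apply Hx; eexists; reflexivity.
        + intros y _ Hy [m Hm]. destruct (proj1 (Hm (PE 0)) (Hy _ (or_introl eq_refl)))
            as [j Hj]; discriminate. }
    assert (HE : ~ C Eset).
    { intros [m Hm]. destruct (proj1 (Hm (PE 0)) (ex_intro _ 0 eq_refl)) as [j Hj];
      discriminate. }
    destruct (Hreg Eset C UF_Eset Ccl HE) as [U [V [oU [oV [UE [CV disj]]]]]].
    destruct (oU Eset UF_Eset UE) as [s [Hs1 Hs2]].
    destruct (list_bnd s) as [N HN].
    assert (VD : V (Dset N)).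
    { apply CV; [apply UF_Dset|]. exists N; tauto. }
    destruct (oV (Dset N) (UF_Dset N) VD) as [s' [Hs1' Hs2']].
    destruct (list_bnd s') as [K HK].
    apply (disj (upM N K) (UF_upM N K)).
    + apply Hs2; [apply UF_upM|]. intros i Hi.
      destruct (Hs1 i Hi) as [j ->]. specialize (HN _ Hi). unfold N_sub, upM in *; simpl in *. lia.
    + apply Hs2'; [apply UF_upM|]. intros i Hi.
      destruct (Hs1' i Hi) as [j ->]. specialize (HK _ Hi). unfold N_sub, upM in *; simpl in *. split; [auto|lia].
Qed.
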